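(* Fix $\kappa\ge20$, $\delta>0$ and constants $\mathcal{C},\beta,R>0$. For the function $d_*(T,\delta)$ defined in the context, let $$T_2(\delta)=\inf\Big\{T\ \Big|\ d_*(t,\delta)\le\frac{\kappa\,d_*(t/\kappa^2,\delta)}{8}\ \text{ for all } t\ge T\Big\}.$$ Then $T_2(\delta)<\infty$.
   Context: $M=(C,A,B)$ with $C\in\mathbb{R}^{p\times n}$, $A\in\mathbb{R}^{n\times n}$, $B\in\mathbb{R}^{n\times m}$, $\rho(A)<1$. $\mathcal{H}_{0,a,b}$ is the block Hankel matrix with $(i,j)$ block $CA^{i+j-2}B$ ($a=b=\infty$ allowed), and finite Hankel matrices are compared with $\mathcal{H}_{0,\infty,\infty}$ after zero padding to doubly infinite matrices (operator norm on $\ell^2$). For $T>0$, $$d_*(T,\delta)=\inf\Big\{d\in\mathbb{Z}_{\ge1}\ \Big|\ \mathcal{C}\beta R\sqrt d\sqrt{\frac{pd+\log(T/\delta)}{T}}\ge\|\mathcal{H}_{0,d,d}-\mathcal{H}_{0,\infty,\infty}\|_2\Big\}.$$ *)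

(* Defs.v *)
From HB Require Import structures.
From mathcomp Require Import all_boot all_order all_algebra.
From mathcomp Require Import all_classical all_reals all_analysis.
From mathcomp Require Import complex.
Set Implicit Arguments. Unset Strict Implicit. Unset Printing Implicit Defensive.
Import Order.TTheory GRing.Theory Num.Theory.
Local Open Scope ring_scope.
Local Open Scope classical_set_scope.

Section Hankel.
Variable R : realType.

Definition spectral_radius_lt1 (n : nat) (A : 'M[R]_n) : Prop :=
  forall z : complex.complex (R : realFieldType),
    @eigenvalue (complex.complex (R : realFieldType)) n
      (map_mx (fun x : R => complex.Complex x 0) A) z -> `|z| < 1.

Variables (p n m : nat) (C : 'M[R]_(p, n)) (A : 'M[R]_n) (B : 'M[R]_(n, m)).

(* (k,l) scalar entry of the block (i,j) (0-indexed blocks) of H_{0,oo,oo}: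
   block (i+1, j+1) in the paper's 1-indexing is C A^{i+j} B. *)
Definition hankel_inf (i j : nat) (k : 'I_p) (l : 'I_m) : R :=
  (C *m A ^+ (i + j) *m B) k l.

(* H_{0,d,d}, zero-padded to a doubly infinite matrix, minus H_{0,oo,oo} *)
Definition hankel_diff (d : nat) (i j : nat) (k : 'I_p) (l : 'I_m) : R :=
  (if (i < d)%N && (j < d)%N then hankel_inf i j k l else 0) - hankel_inf i j k l.

Definition trunc_val (d N : nat) (x : 'I_N * 'I_m -> R) : R :=
  Num.sqrt (\sum_(r : 'I_N * 'I_p)
     (\sum_(c : 'I_N * 'I_m) hankel_diff d r.1 c.1 r.2 c.2 * x c) ^+ 2).

(* ell^2 operator norm ||H_{0,d,d} - H_{0,oo,oo}||_2 (possibly +oo), computed as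
   the supremum over finitely supported unit vectors and finite row truncations *)
Definition hankel_diff_norm (d : nat) : \bar R :=
  ereal_sup [set (trunc_val d (projT2 x))%:E | x in
     [set x : {N : nat & 'I_N * 'I_m -> R} |
        \sum_(c : 'I_(projT1 x) * 'I_m) (projT2 x c) ^+ 2 <= 1]].

(* d_*(T, delta), as an extended real (inf of the empty set = +oo) *)
Definition dstar_set (cC beta Rc T delta : R) : set nat :=
  [set d : nat | (1 <= d)%N /\
     (hankel_diff_norm d <=
     (cC * beta * Rc * Num.sqrt (d%:R) *
        Num.sqrt ((p%:R * d%:R + ln (T / delta)) / T))%:E)%E].

Definition dstar (cC beta Rc T delta : R) : \bar R :=
  ereal_inf [set (d%:R)%:E | d in dstar_set cC beta Rc T delta].

End Hankel.

(* Main.v *)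
Require Import Defs.
From HB Require Import structures.
From mathcomp Require Import all_boot all_order all_algebra.
From mathcomp Require Import all_classical all_reals all_analysis.
From mathcomp Require Import complex.
From mathcomp Require Import ring lra zify.
Import Order.TTheory GRing.Theory Num.Theory.
Local Open Scope ring_scope.

Set Implicit Arguments. Unset Strict Implicit.

Section SeqDecay.
Variable F : numFieldType.

Definition shd (l : F) (u : nat -> F) : nat -> F := fun k => u k.+1 - l * u k.

Fixpoint Pop (s : seq F) (u : nat -> F) : nat -> F :=
  match s with [::] => u | l :: s' => Pop s' (shd l u) end.

Lemma Pop_ext s u w : (forall k, u k = w k) -> forall k, Pop s u k = Pop s w k.
Proof.
elim: s u w => [|l s IH] u w H k //=.
apply: IH => k'; by rewrite /shd !H.
Qed.

Lemma sum_shift (u : nat -> F) L :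
  \sum_(l < L.+1) u l = u 0%N + \sum_(l < L) u l.+1.
Proof. by rewrite big_ord_recl. Qed.

Lemma sum_le_succ (u : nat -> F) L : (forall l, 0 <= u l) ->
  \sum_(l < L) u l <= \sum_(l < L.+1) u l.
Proof. by move=> H; rewrite big_ord_recr /= lerDl. Qed.

Lemma seq_decay (r : F) : 0 < r -> forall s, all (fun l => `|l| < r) s ->
  exists c, 0 <= c /\ forall u, (forall k, Pop s u k = 0) ->
    forall k, `|u k| <= c * r ^+ k * \sum_(l < size s) `|u l|.
Proof.
move=> r0 s; elim: s => [|l s IH] /=.
  by move=> _; exists 0; split => // u Hu k; rewrite Hu normr0 !mul0r.
case/andP=> hl /IH [c [c0 Hc]].
have rl : 0 < r - `|l| by rewrite subr_gt0.
pose c' := 1 + (c * (1 + `|l|) / (r - `|l|)).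
have q0 : 0 <= c * (1 + `|l|) / (r - `|l|).
  by rewrite divr_ge0 ?(ltW rl) // mulr_ge0 // addr_ge0.
have c'1 : 1 <= c' by rewrite /c' lerDl.
have c'2 : c * (1 + `|l|) <= c' * (r - `|l|).
  by rewrite -ler_pdivrMr // /c' lerDr.
exists c'; split; first by apply: le_trans c'1.
move=> u Hu.
set W := \sum_(i < (size s).+1) `|u i|.
have W0 : 0 <= W by apply: sumr_ge0.
have Hv : forall k, `|shd l u k| <= c * (1 + `|l|) * r ^+ k * W.
  move=> k; apply: le_trans (Hc (shd l u) Hu k) _.
  rewrite -!mulrA; apply: ler_wpM2l => //.
  rewrite [X in _ <= X]mulrC -mulrA; apply: ler_wpM2l; first exact: exprn_ge0 (ltW r0).
  rewrite mulrC mulrDl mul1r.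
  apply: le_trans (_ : _ <= \sum_(i < size s) (`|u i.+1| + `|l| * `|u i|)) _.
    by apply: ler_sum => i _; rewrite /shd; apply: le_trans (ler_normB _ _) _; rewrite normrM.
  rewrite big_split /= lerD //.
    by rewrite /W (@sum_shift (fun i => `|u i|)) lerDr.
  rewrite -mulr_sumr; apply: ler_wpM2l => //; exact: (@sum_le_succ (fun i => `|u i|)).

move=> k; elim: k => [|k IHk].
  rewrite expr0 mulr1 /W (@sum_shift (fun i => `|u i|)).
  apply: le_trans (_ : _ <= `|u 0%N| + \sum_(i < size s) `|u i.+1|) _.
    by rewrite lerDl sumr_ge0.
  rewrite -[X in X <= _]mul1r ler_wpM2r //; by rewrite addr_ge0 // sumr_ge0.
have -> : u k.+1 = shd l u k + l * u k by rewrite /shd subrK.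
apply: le_trans (ler_normD _ _) _.
rewrite normrM.
apply: le_trans (lerD (Hv k) (ler_wpM2l (normr_ge0 l) IHk)) _.
rewrite exprS.
have rk : 0 <= r ^+ k by exact: exprn_ge0 (ltW r0).
have e1 : `|l| * (c' * r ^+ k * W) = (`|l| * c') * (r ^+ k * W) by rewrite !mulrA.
have e2 : c * (1 + `|l|) * r ^+ k * W = c * (1 + `|l|) * (r ^+ k * W) by rewrite !mulrA.
have e3 : c' * (r * r ^+ k) * W = c' * r * (r ^+ k * W) by rewrite !mulrA.
rewrite e1 e2 e3 -mulrDl; apply: ler_wpM2r; first by rewrite mulr_ge0.
have : c * (1 + `|l|) + `|l| * c' <= c' * (r - `|l|) + `|l| * c' by rewrite lerD2r.
by rewrite mulrBr [`|l| * c']mulrC subrK.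
Qed.

End SeqDecay.
Arguments Pop {F} s u _.
Arguments shd {F} l u _.

Unset Implicit Arguments. Set Strict Implicit.

Section Mx.
Variable F : numFieldType.

Definition Qm n' (M : 'M[F]_n'.+1) (s : seq F) : 'M[F]_n'.+1 :=
  foldr (fun l acc => acc *m (M - l%:M)) 1%:M s.
Arguments Qm {n'} M s.

Lemma Pop_mx n' p m (M : 'M[F]_n'.+1) (Cc : 'M[F]_(p, n'.+1)) (a : 'I_p) (b : 'I_m) s :
  forall (N : 'M[F]_(n'.+1, m)) k,
  Pop s (fun k => (Cc *m M ^+ k *m N) a b) k = (Cc *m M ^+ k *m (Qm M s *m N)) a b.
Proof.
elim: s => [|l s IH] N k /=; first by rewrite mul1mx.
rewrite (@Pop_ext _ s _ (fun k => (Cc *m M ^+ k *m ((M - l%:M) *m N)) a b)).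
  by rewrite IH !mulmxA.
move=> k'; rewrite /shd.
have E : Cc *m M ^+ k'.+1 *m N - l *: (Cc *m M ^+ k' *m N) = Cc *m M ^+ k' *m ((M - l%:M) *m N).
  by rewrite mulmxBl mul_scalar_mx mulmxBr -scalemxAr exprSr !mulmxA.
by rewrite -E !mxE.
Qed.

Lemma Qm_rev n' (M : 'M[F]_n'.+1) s : Qm M s = \prod_(x <- rev s) (M - x%:M).
Proof.
elim: s => [|l s IH] /=; first by rewrite big_nil.
by rewrite rev_cons big_rcons IH mulmxE.
Qed.

End Mx.
Arguments Qm {F n'} M s.

Section Cx.
Variable R : realType.
Local Open Scope complex_scope.

Lemma normc_real (x : R) : `|x%:C| = `|x|%:C :> R[i].
Proof. by rewrite normc_def /= expr0n /= addr0 sqrtr_sqr. Qed.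

Lemma bern4 (x : R) : 0 <= x -> x <= 1/8 -> 1 - 4 * x <= (1 - x) ^+ 4.
Proof.
move=> x0 x1.
have h2 : 1 - 2 * x <= (1 - x) ^+ 2 by rewrite expr2; nra.
have h3 : (1 - 2 * x) ^+ 2 <= ((1 - x) ^+ 2) ^+ 2.
  by apply: lerXn2r; rewrite ?nnegrE //; [lra | rewrite expr2; nra].
have h4 : 1 - 4 * x <= (1 - 2 * x) ^+ 2 by rewrite expr2; nra.
rewrite -exprM /= in h3.
lra.
Qed.

Lemma list_rate (s : seq R[i]) : all (fun z => `|z| < 1) s ->
  exists t : R, 0 < t < 1 /\ all (fun z => `|z| < (t ^+ 4)%:C) s.
Proof.
elim: s => [|z s IH] /=.
  by move=> _; exists (1/2); split => //; lra.
case/andP=> hz /IH [t [/andP[t0 t1] Ht]].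
have [a [a0 za]] : exists a : R, 0 <= a /\ `|z| = a%:C.
  by exists (Num.sqrt ((complex.Re z)^+2 + (complex.Im z)^+2)); rewrite normc_def sqrtr_ge0.
move: hz; rewrite za ltcR => a1.
pose x := (1 - a) / 8.
have ex : 8 * x = 1 - a by rewrite /x mulrC divfK.
pose t1' := 1 - x.
have t10 : 0 < t1' < 1 by apply/andP; rewrite /t1'; split; lra.
have at1 : a < t1' ^+ 4.
  have x0 : 0 <= x by lra.
  have x1 : x <= 1/8 by lra.
  have := @bern4 x x0 x1; rewrite /t1'; lra.
exists (Num.max t t1'); split.
  by rewrite lt_max t0 /= gt_max t1 (andP t10).2.
apply/andP; split.
  rewrite ltcR; apply: lt_le_trans at1 _.
  apply: lerXn2r; rewrite ?nnegrE ?le_max ?lexx ?orbT //.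
    by apply: ltW; move: t10 => /andP[].
  by rewrite (ltW t0).
apply/allP => w /(allP Ht) hw; apply: lt_le_trans hw _.
rewrite lecR; apply: lerXn2r; rewrite ?nnegrE ?le_max ?lexx //.
  exact: ltW.
by rewrite (ltW t0).
Qed.

End Cx.

Section KeySec.
Local Open Scope complex_scope.

Lemma key (R : realType) p n m (C : 'M[R]_(p,n)) (A : 'M[R]_n) (B : 'M[R]_(n,m))
  (hA : spectral_radius_lt1 A) :
  exists t c0 L, (0 < t < 1) /\ 0 <= c0 /\ forall d k a b,
  `|(C *m A ^+ (d + k) *m B) a b| <=
     c0 * (t ^+ 4) ^+ k * \sum_(l < L) `|(C *m A ^+ (d + l) *m B) a b|.
Proof.
case: n C A B hA => [|n'] C A B hA.
  exists (1/2), 0, 0%N; split; first by apply/andP; split; lra.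
  split => // d k a b; by rewrite (thinmx0 C) !mul0mx mxE normr0 !mul0r.
pose M := map_mx (real_complex R) A.
have eM : map_mx (fun x : R => complex.Complex x 0) A = M by apply/matrixP => i j; rewrite !mxE.
have [rs Hrs] := closed_field_poly_normal (char_poly M).
rewrite (monicP (char_poly_monic M)) scale1r in Hrs.
have Hroots : all (fun z => `|z| < 1) rs.
  apply/allP => z zin; apply: hA; rewrite eM eigenvalue_root_char Hrs root_prod_XsubC //.
have [t [t01 Ht]] := @list_rate R rs Hroots.
have r0 : 0 < (t ^+ 4)%:C by rewrite ltcR exprn_gt0 //; case/andP: t01.
have Hall : all (fun l => `|l| < (t ^+ 4)%:C) (rev rs) by rewrite all_rev.
have [c [c0 Hc]] := @seq_decay _ _ r0 _ Hall.
have HQ : Qm M (rev rs) = 0.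
  rewrite Qm_rev revK -(Cayley_Hamilton M) Hrs rmorph_prod; apply: eq_bigr => z _.
  by rewrite rmorphB /= horner_mx_X horner_mx_C.
have ec : c = (complex.Re c)%:C.
  by move: (ger0_Im c0); case: (c) => x y /= ->.
exists t, (complex.Re c), (size (rev rs)); split => //; split.
  by rewrite -lecR -ec.
move=> d k a b.
pose u := fun k => ((C *m A ^+ (d + k) *m B) a b)%:C.
pose Cc := map_mx (real_complex R) C.
pose Bc := map_mx (real_complex R) B.
have Hu : forall k, u k = (Cc *m M ^+ k *m (M ^+ d *m Bc)) a b.
  have mX : forall j, map_mx (real_complex R) (A ^+ j) = M ^+ j.
    elim=> [|j IHj]; first by rewrite !expr0 map_mx1.
    by rewrite !exprS -IHj -!mulmxE map_mxM.
  move=> k'; rewrite /u /Cc /Bc -!mX -!map_mxM [RHS]mxE; congr (_ %:C).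
  by rewrite addnC exprD -mulmxE !mulmxA.
have HP : forall k, Pop (rev rs) u k = 0.
  move=> k'; rewrite (Pop_ext _ Hu) Pop_mx HQ mul0mx mulmx0 mxE //.
have := Hc u HP k.
rewrite /u normc_real ec.
have -> : \sum_(l < size (rev rs)) `|((C *m A ^+ (d + l) *m B) a b)%:C| =
   (\sum_(l < size (rev rs)) `|(C *m A ^+ (d + l) *m B) a b|)%:C.
  by rewrite rmorph_sum; apply: eq_bigr => l _; rewrite normc_real.
by rewrite -rmorphXn -!rmorphM lecR.
Qed.

End KeySec.

Section Norm.
Variables (R : realType) (p n m : nat) (C : 'M[R]_(p, n)) (A : 'M[R]_n) (B : 'M[R]_(n, m)).
Local Notation f := (hankel_diff_norm C A B).
Local Notation h k := (C *m A ^+ k *m B).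

Lemma le_sum_term (I : finType) (F : I -> R) i0 : (forall i, 0 <= F i) -> F i0 <= \sum_i F i.
Proof. by move=> H; rewrite (bigD1 i0) //= lerDl sumr_ge0. Qed.

Lemma f_ge0 d : (0 <= f d)%E.
Proof.
apply: (@le_trans _ _ ((trunc_val C A B d (fun _ : 'I_0 * 'I_m => 0))%:E)).
  rewrite lee_fin /trunc_val sqrtr_ge0 //.
apply: ereal_sup_ubound; exists (existT _ 0%N (fun _ : 'I_0 * 'I_m => 0)) => //=.
by rewrite big1 // => c _; rewrite expr0n.
Qed.

Lemma f_lb d i j a b : (d <= i)%N -> ((`|h (i + j) a b|)%:E <= f d)%E.
Proof.
move=> di.
pose N := (maxn i j).+1.
have iN : (i < N)%N by rewrite ltnS leq_maxl.
have jN : (j < N)%N by rewrite ltnS leq_maxr.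
pose c0 : 'I_N * 'I_m := (Ordinal jN, b).
pose r0 : 'I_N * 'I_p := (Ordinal iN, a).
pose x := fun c : 'I_N * 'I_m => ((c == c0) : bool)%:R : R.
apply: (@le_trans _ _ ((trunc_val C A B d x)%:E)); last first.
  apply: ereal_sup_ubound; exists (existT _ N x) => //=.
  rewrite (bigD1 c0) //= big1 ?addr0 /x ?eqxx ?expr1n //.
  by move=> c /negbTE ->; rewrite expr0n.
rewrite lee_fin /trunc_val.
have Hy : forall r : 'I_N * 'I_p, \sum_(c : 'I_N * 'I_m) hankel_diff C A B d r.1 c.1 r.2 c.2 * x c
    = hankel_diff C A B d r.1 j r.2 b.
  move=> r; rewrite (bigD1 c0) //= big1 ?addr0 /x ?eqxx ?mulr1 //.
  by move=> c /negbTE ->; rewrite mulr0.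
under eq_bigr => r _ do rewrite Hy.
rewrite -sqrtr_sqr; apply: ler_wsqrtr.
have H1 := @le_sum_term _ (fun r : 'I_N * 'I_p => (hankel_diff C A B d r.1 j r.2 b) ^+ 2) r0
  (fun r => sqr_ge0 _).
apply: le_trans H1.
  rewrite /= /hankel_diff /hankel_inf.
  have -> : ((i < d)%N && (j < d)%N) = false by apply/negbTE; rewrite negb_and -leqNgt di.
by rewrite sub0r sqrrN.
Qed.

Lemma geo_le (t : R) N : 0 <= t < 1 -> \sum_(i < N) t ^+ i <= (1 - t)^-1.
Proof.
case/andP=> t0 t1.
have E : forall N, (\sum_(i < N) t ^+ i) * (1 - t) = 1 - t ^+ N.
  elim=> [|k IH]; first by rewrite big_ord0 mul0r expr0 subrr.
  by rewrite big_ord_recr /= mulrDl IH exprS; ring.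
have pt : 0 < 1 - t by rewrite subr_gt0.
rewrite -(ler_pM2r pt) E mulVf ?gt_eqF // lerBlDr lerDl exprn_ge0 //.
Qed.

Lemma sum_sq_le (I : finType) (z : I -> R) : Num.sqrt (\sum_i z i ^+ 2) <= \sum_i `|z i|.
Proof.
have S0 : 0 <= \sum_i `|z i| by apply: sumr_ge0.
rewrite -[X in _ <= X](ger0_norm S0) -sqrtr_sqr; apply: ler_wsqrtr.
rewrite expr2 mulr_suml; apply: ler_sum => i _.
rewrite -real_normK ?num_real // expr2; apply: ler_wpM2l => //.
exact: (@le_sum_term _ (fun i => `|z i|)).
Qed.

Lemma sum_pair_const (N q : nat) (t : R) :
  \sum_(r : 'I_N * 'I_q) t ^+ r.1 = q%:R * \sum_(i < N) t ^+ i.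
Proof.
rewrite -(pair_bigA _ (fun (i : 'I_N) (_ : 'I_q) => t ^+ i)) /= mulr_sumr.
by apply: eq_bigr => i _; rewrite sumr_const card_ord mulr_natl.
Qed.

Lemma f_ub d (G t : R) : 0 <= G -> 0 <= t < 1 ->
  (forall i j a b, ~~((i < d) && (j < d))%N -> `|h (i + j) a b| <= G * t ^+ (i + j)) ->
  (f d <= (p%:R * m%:R * G / (1 - t) ^+ 2)%:E)%E.
Proof.
move=> G0 t01 HG; apply: ub_ereal_sup => _ [[N x] /= Px <-]; rewrite lee_fin /trunc_val.
apply: le_trans (@sum_sq_le _ (fun r : 'I_N * 'I_p => \sum_(c : 'I_N * 'I_m) hankel_diff C A B d r.1 c.1 r.2 c.2 * x c)) _.
have xb : forall c, `|x c| <= 1.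
  move=> c; have := le_trans (@le_sum_term _ (fun c => x c ^+ 2) c (fun _ => sqr_ge0 _)) Px.
  by rewrite -real_normK ?num_real // (@expr_le1 _ 2).
have t0 : 0 <= t by case/andP: t01.
have HD : forall (r : 'I_N * 'I_p) (c : 'I_N * 'I_m),
    `|hankel_diff C A B d r.1 c.1 r.2 c.2| <= G * (t ^+ r.1 * t ^+ c.1).
  move=> [i a] [j b] /=; rewrite /hankel_diff /hankel_inf; case: ifP => H.
    by rewrite subrr normr0 mulr_ge0 // mulr_ge0 // exprn_ge0.
  by rewrite sub0r normrN -exprD; apply: HG; rewrite H.
apply: (@le_trans _ _ (\sum_(r : 'I_N * 'I_p) \sum_(c : 'I_N * 'I_m) G * (t ^+ r.1 * t ^+ c.1))).
  apply: ler_sum => r _; apply: le_trans (ler_norm_sum _ _ _) _.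
  apply: ler_sum => c _; rewrite normrM.
  apply: le_trans (HD r c); rewrite -[X in _ <= X]mulr1; apply: ler_wpM2l => //.
have E : \sum_(r : 'I_N * 'I_p) \sum_(c : 'I_N * 'I_m) G * (t ^+ r.1 * t ^+ c.1) =
   G * ((\sum_(r : 'I_N * 'I_p) t ^+ r.1) * (\sum_(c : 'I_N * 'I_m) t ^+ c.1)).
  rewrite mulr_suml mulr_sumr; apply: eq_bigr => r _.
  rewrite mulr_sumr mulr_sumr; apply: eq_bigr => c _; by rewrite mulrA.
rewrite E !sum_pair_const.
have g0 := @geo_le t N t01.
have S0 : 0 <= \sum_(i < N) t ^+ i by apply: sumr_ge0 => i _; apply: exprn_ge0.
have pt : 0 < 1 - t by case/andP: t01 => _ t1; rewrite subr_gt0.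
apply: le_trans (_ : G * ((p%:R * (1 - t)^-1) * (m%:R * (1 - t)^-1)) <= _).
  apply: ler_wpM2l => //; apply: ler_pM; rewrite ?mulr_ge0 //;
  by apply: ler_wpM2l.
by rewrite le_eqVlt; apply/orP; left; apply/eqP; rewrite expr2 invfM; ring.
Qed.

End Norm.

Section G.
Variables (R : realType) (p : nat) (c delta : R).
Hypotheses (c0 : 0 < c) (hd : 0 < delta).

Definition gg (d : nat) (T : R) :=
  c * Num.sqrt (d%:R) * Num.sqrt ((p%:R * d%:R + ln (T / delta)) / T).

Lemma gg_ge0 d T : 0 <= gg d T.
Proof. by rewrite /gg !mulr_ge0 ?sqrtr_ge0 // ltW. Qed.

Lemma gg_scale d T k : 0 < T -> 1 <= k -> gg d (T / k ^+ 2) <= k * gg (2 * d) T.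
Proof.
move=> T0 k1.
have k0 : 0 < k by lra.
have kk : 0 < k ^+ 2 by rewrite exprn_gt0.
have E : (p%:R * d%:R + ln (T / k ^+ 2 / delta)) / (T / k ^+ 2)
     = k ^+ 2 * ((p%:R * d%:R + ln (T / k ^+ 2 / delta)) / T).
  by field; rewrite !gt_eqF.
have L : ln (T / k ^+ 2 / delta) <= ln (T / delta).
  rewrite ler_ln ?posrE ?divr_gt0 //.
  rewrite ler_pM2r ?invr_gt0 // ler_pdivrMr // ler_peMr ?(ltW T0) //.
  by rewrite expr_ge1 // ltW.
have pd : p%:R * d%:R <= p%:R * (2 * d)%:R :> R.
  by rewrite ler_wpM2l // ler_nat leq_pmull.
rewrite /gg E sqrtrM ?(ltW kk) // sqrtr_sqr ger0_norm ?(ltW k0) //.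
have s1 : Num.sqrt (d%:R) <= Num.sqrt ((2 * d)%:R) :> R.
  by apply: ler_wsqrtr; rewrite ler_nat leq_pmull.
have s2 : Num.sqrt ((p%:R * d%:R + ln (T / k ^+ 2 / delta)) / T) <=
          Num.sqrt ((p%:R * (2 * d)%:R + ln (T / delta)) / T).
  apply: ler_wsqrtr; rewrite ler_pM2r ?invr_gt0 //; exact: lerD.
have H := ler_pM (sqrtr_ge0 _) (sqrtr_ge0 _) s1 s2.
move: H; set a := Num.sqrt (d%:R); set b := Num.sqrt ((2 * d)%:R).
set x := Num.sqrt (_ / T); set y := Num.sqrt (_ / T) => H.
have e1 : c * a * (k * x) = (k * c) * (a * x) by ring.
have e2 : k * (c * b * y) = (k * c) * (b * y) by ring.
rewrite e1 e2; apply: ler_wpM2l => //; rewrite mulr_ge0 // ltW //.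
Qed.

Lemma gg_small d eps : 0 < eps -> exists T1, 0 < T1 /\ forall T, T1 <= T -> gg d T < eps.
Proof.
move=> e0.
pose a := c * Num.sqrt (d%:R).
have a0 : 0 <= a by rewrite /a mulr_ge0 ?sqrtr_ge0 // ltW.
have a1 : 0 < a + 1 by lra.
pose eta := (eps / (a + 1)) ^+ 2.
have eta0 : 0 < eta by rewrite /eta exprn_gt0 // divr_gt0.
pose P := p%:R * d%:R : R.
have P0 : 0 <= P by rewrite /P mulr_ge0.
pose Q := delta * eta.
have Q0 : 0 < Q by rewrite /Q mulr_gt0.
pose s0 := 1 + (P + 2) / Q.
have s0E : Q * (s0 - 1) = P + 2 by rewrite /s0 addrC addKr mulrC divfK // gt_eqF.
have s01 : 1 <= s0 by rewrite /s0 lerDl divr_ge0 // ?addr_ge0 // ltW.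
exists (delta * s0 ^+ 2); split; first by rewrite mulr_gt0 // exprn_gt0 //; lra.
move=> T HT.
have T0 : 0 < T by apply: lt_le_trans HT; rewrite mulr_gt0 // exprn_gt0 //; lra.
pose s := Num.sqrt (T / delta).
have Td0 : 0 <= T / delta by rewrite divr_ge0 // ltW.
have ss : s ^+ 2 = T / delta by rewrite /s sqr_sqrtr.
have s0s : s0 <= s.
  have : s0 ^+ 2 <= T / delta by rewrite ler_pdivlMr // mulrC.
  rewrite -ss => H.
  have sp : 0 <= s by rewrite /s sqrtr_ge0.
  rewrite !expr2 in H; nra.
have s1 : 1 <= s by lra.
have Tds : T = delta * s ^+ 2 by rewrite ss mulrC divfK // gt_eqF.
have hln : ln (T / delta) <= 2 * s.
  rewrite -ss lnXn; last lra.
  have H : ln (1 + (s - 1)) <= s - 1 by apply: le_ln1Dx; lra.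
  have e : 1 + (s - 1) = s by ring.
  rewrite e in H; move: H.
  rewrite mulr2n; lra.
have hX : (P + ln (T / delta)) / T < eta.
  apply: le_lt_trans (_ : (P + 2 * s) / T < eta).
    by rewrite ler_pM2r ?invr_gt0 // lerD2l.
  rewrite ltr_pdivrMr // Tds.
  have h1 : P + 2 < Q * s by nra.
  have -> : eta * (delta * s ^+ 2) = Q * s * s by rewrite /Q expr2; ring.
  have h2 : 0 < s * (Q * s - (P + 2)) by apply: mulr_gt0; lra.
  have h3 : 0 <= P * (s - 1) by apply: mulr_ge0; lra.
  have e : Q * s * s - (P + 2 * s) = s * (Q * s - (P + 2)) + P * (s - 1) by ring.
  lra.
have sX : Num.sqrt ((P + ln (T / delta)) / T) < eps / (a + 1).
  rewrite -[X in _ < X](@ger0_norm _ (eps / (a + 1))) ?divr_ge0 ?(ltW e0) ?(ltW a1) //.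
  by rewrite -sqrtr_sqr ltr_sqrt.
have -> : gg d T = a * Num.sqrt ((P + ln (T / delta)) / T) by [].
apply: le_lt_trans (_ : a * (eps / (a + 1)) < eps).
  by apply: ler_wpM2l => //; apply: ltW.
by rewrite mulrA ltr_pdivrMr //; nra.
Qed.

Lemma bern_D1 (t K : R) : 0 < t < 1 -> 0 <= K -> exists D1 : nat, forall D : nat, (D1 <= D)%N -> K * t ^+ D <= 1.
Proof.
case/andP=> t0 t1 K0.
pose y := t^-1 - 1.
have y0 : 0 < y by rewrite /y subr_gt0 invf_gt1.
have B : forall D : nat, 1 + D%:R * y <= (1 + y) ^+ D.
  elim=> [|D IH]; first by rewrite mul0r addr0 expr0.
  rewrite exprS -natr1.
  have D0 : 0 <= D%:R :> R by [].
  have h1 : 0 <= (1 + y) * ((1 + y) ^+ D - (1 + D%:R * y)) by apply: mulr_ge0; lra.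
  have h2 : 0 <= D%:R * y * y by rewrite !mulr_ge0 // ltW.
  have e : (1 + y) * (1 + D%:R * y) = 1 + (D%:R + 1) * y + D%:R * y * y by ring.
  have e2 : (1 + y) * ((1 + y) ^+ D - (1 + D%:R * y)) = (1 + y) * (1 + y) ^+ D - (1 + y) * (1 + D%:R * y) by ring.
  lra.
have ty : t = (1 + y)^-1 by rewrite /y addrC subrK invrK.
exists (Num.Def.archi_bound (K / y)) => D HD.
have HK : K / y < D%:R.
  apply: lt_le_trans (archi_boundP _) _; first by rewrite divr_ge0 // ltW.
  by rewrite ler_nat.
have X0 : 0 < (1 + y) ^+ D by rewrite exprn_gt0 //; lra.
rewrite ty exprVn ler_pdivrMr // mul1r.
apply: le_trans (B D).
move: HK; rewrite ltr_pdivrMr // => HK; lra.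
Qed.

End G.

Lemma nat1 D i j : (2 * D <= i + j)%N -> (i + j = D + (i + j - D))%N.
Proof. lia. Qed.
Lemma nat2 D i j : (2 * D <= i + j)%N -> (D <= i + j - D)%N.
Proof. lia. Qed.
Lemma nat3 D k : (D <= k)%N -> (2 * D + (D + k) <= 4 * k)%N.
Proof. lia. Qed.

Theorem proposition17 (R : realType) (p n m : nat)
    (C : 'M[R]_(p, n)) (A : 'M[R]_n) (B : 'M[R]_(n, m))
    (hA : spectral_radius_lt1 A)
    (kappa delta cC beta Rc : R)
    (hkappa : 20 <= kappa) (hdelta : 0 < delta)
    (hcC : 0 < cC) (hbeta : 0 < beta) (hRc : 0 < Rc) :
  exists T0 : R, 0 < T0 /\
    forall t : R, T0 <= t ->
      (dstar C A B cC beta Rc t delta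
         <= (kappa / 8)%:E * dstar C A B cC beta Rc (t / kappa ^+ 2) delta)%E.
Proof.
have [t [c0 [L [t01 [c00 Hkey]]]]] := key R p n m C A B hA.
have c_pos : 0 < cC * beta * Rc by rewrite !mulr_gt0.
have k0 : 0 < kappa by lra.
pose f := hankel_diff_norm C A B.
have t0 : 0 < t by case/andP: t01.
have t1 : t < 1 by case/andP: t01.
pose K := p%:R * m%:R * (c0 * L%:R) / (1 - t) ^+ 2.
have K0 : 0 <= K.
  by rewrite /K divr_ge0 ?exprn_ge0 ?mulr_ge0 //; lra.
have decay : forall D F, f D = F%:E -> (f (2 * D)%N <= (K * F * t ^+ (2 * D))%:E)%E.
  move=> D F HF.
  have F0 : 0 <= F by rewrite -lee_fin -HF f_ge0.
  have win : forall l a b, `|(C *m A ^+ (D + l) *m B) a b| <= F.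
    move=> l a b; rewrite -lee_fin -HF.
    by have := f_lb R p n m C A B D (D + l) 0 a b (leq_addr _ _); rewrite addn0.
  pose G := c0 * L%:R * F * t ^+ (2 * D).
  have G0 : 0 <= G by rewrite /G !mulr_ge0 // exprn_ge0 // ltW.
  have E : p%:R * m%:R * G / (1 - t) ^+ 2 = K * F * t ^+ (2 * D) by rewrite /K /G; ring.
  rewrite -E; apply: f_ub => //; first by rewrite (ltW t0) t1.
  move=> i j a b Hij.
  have Dij : (2 * D <= i + j)%N.
    move: Hij; rewrite negb_and -!leqNgt => /orP[] H.
      exact: leq_trans H (leq_addr _ _).
    exact: leq_trans H (leq_addl _ _).
  pose k := (i + j - D)%N.
  have ek : (i + j = D + k)%N by exact: nat1.
  have Dk : (D <= k)%N by exact: nat2.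
  rewrite ek; apply: le_trans (Hkey D k a b) _.
  have S : \sum_(l < L) `|(C *m A ^+ (D + l) *m B) a b| <= L%:R * F.
    apply: le_trans (_ : \sum_(l < L) F <= _); first by apply: ler_sum => l _; exact: win.
    by rewrite sumr_const card_ord mulr_natl.
  have tk : (t ^+ 4) ^+ k <= t ^+ (2 * D) * t ^+ (D + k).
    rewrite -exprM -exprD; apply: ler_wiXn2l; rewrite ?(ltW t0) ?(ltW t1) //.
    exact: nat3.
  rewrite /G.
  apply: le_trans (_ : c0 * (t ^+ 4) ^+ k * (L%:R * F) <= _).
    by apply: ler_wpM2l => //; rewrite mulr_ge0 // exprn_ge0 // exprn_ge0 // ltW.
  have e1 : c0 * (t ^+ 4) ^+ k * (L%:R * F) = (c0 * L%:R * F) * (t ^+ 4) ^+ k by ring.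
  have e2 : c0 * L%:R * F * t ^+ (2 * D) * t ^+ (D + k) = (c0 * L%:R * F) * (t ^+ (2 * D) * t ^+ (D + k)) by ring.
  rewrite e1 e2; apply: ler_wpM2l => //; rewrite !mulr_ge0 //.
have [D1 HD1] := @bern_D1 R t (K * kappa) t01 (mulr_ge0 K0 (ltW k0)).
pose g := gg R p (cC * beta * Rc) delta.
have small : forall N, exists T2, 0 < T2 /\ forall T, T2 <= T -> forall D, (D < N)%N ->
    (0 < f D)%E -> ((g D T)%:E < f D)%E.
  elim=> [|N [T2 [T20 HT2]]].
    by exists 1; split => // T _ D.
  case E : (f N) => [e| |].
  - case: (ltP 0 e) => e0.
      have [T1 [T10 HT1]] := gg_small R p (cC * beta * Rc) delta c_pos hdelta N e e0.
      exists (Num.max T1 T2); split; first by rewrite lt_max T10.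
      move=> T HT D; rewrite ltnS leq_eqVlt => /orP[/eqP -> | DN] HD.
        by rewrite E lte_fin; apply: HT1; apply: le_trans HT; rewrite le_max lexx.
      by apply: HT2 => //; apply: le_trans HT; rewrite le_max lexx orbT.
    exists T2; split => // T HT D; rewrite ltnS leq_eqVlt => /orP[/eqP -> | DN] HD.
      by move: HD; rewrite E lte_fin => HD; have := le_lt_trans e0 HD; rewrite ltxx.
    exact: HT2.
  - exists T2; split => // T HT D; rewrite ltnS leq_eqVlt => /orP[/eqP -> | DN] HD.
      by rewrite E ltey.
    exact: HT2.
  - by have := f_ge0 R p n m C A B N; rewrite -/f E.
have [T2 [T20 HT2]] := small D1.
have kk : 0 < kappa ^+ 2 by rewrite exprn_gt0.
exists (kappa ^+ 2 * T2); split; first by rewrite mulr_gt0.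
move=> t' Ht'.
have tp : 0 < t' by apply: lt_le_trans Ht'; rewrite mulr_gt0.
have HT' : T2 <= t' / kappa ^+ 2 by rewrite ler_pdivlMr // mulrC.
pose S := dstar_set C A B cC beta Rc (t' / kappa ^+ 2) delta.
case: (pselect (exists d, S d)) => [exS | nS]; last first.
  have -> : dstar C A B cC beta Rc (t' / kappa ^+ 2) delta = +oo%E.
    rewrite /dstar -/S.
    have -> : ([set (d%:R)%:E | d in S] = set0 :> set (\bar R))%classic.
      by apply/seteqP; split => // y [d Sd _]; apply: nS; exists d.
    exact: ereal_inf0.
  by rewrite gt0_muley ?lte_fin ?divr_gt0 // leey.
have exS' : exists d, `[< S d >] by case: exS => d Sd; exists d; apply/asboolP.
case: (ex_minnP exS') => D0 /asboolP SD0 minD0.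
have dstar_eq : dstar C A B cC beta Rc (t' / kappa ^+ 2) delta = (D0%:R)%:E.
  apply/eqP; rewrite eq_le; apply/andP; split.
    by apply: ge_ereal_inf; exists (D0%:R)%:E => //; exists D0.
  apply/ereal_infP => _ [d Sd <-]; rewrite lee_fin ler_nat; apply: minD0; exact/asboolP.
case: SD0 => D01 HfD0.
change (is_true (f D0 <= (g D0 (t' / kappa ^+ 2))%:E)%E) in HfD0.
have fD0 : (0 <= f D0)%E by exact: f_ge0.
case EF : (f D0) => [F| |]; first last.
- by rewrite EF in fD0.
- by rewrite EF leye_eq in HfD0.
rewrite EF lee_fin in HfD0.
have Hd := decay D0 F EF.
have g2 : 0 <= g (2 * D0)%N t' by apply: gg_ge0.
have key2 : K * F * t ^+ (2 * D0) <= g (2 * D0)%N t'.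
  have F0 : 0 <= F by rewrite -lee_fin -EF f_ge0.
  case: (eqVneq F 0) => [-> | Fn0]; first by rewrite mulr0 mul0r.
  have Fpos : 0 < F by rewrite lt_def Fn0 F0.
  have D1D0 : (D1 <= D0)%N.
    rewrite leqNgt; apply/negP => Hlt.
    have := HT2 _ HT' D0 Hlt; rewrite EF !lte_fin => /(_ Fpos) H.
    by have := lt_le_trans H HfD0; rewrite ltxx.
  have hK : K * kappa * t ^+ (2 * D0) <= 1.
    by apply: HD1; apply: leq_trans D1D0 _; rewrite leq_pmull.
  have hs := gg_scale R p (cC * beta * Rc) delta c_pos hdelta D0 t' kappa tp (ltac:(lra) : 1 <= kappa).
  have hF : F <= kappa * g (2 * D0)%N t' by apply: le_trans HfD0 hs.
  have a0 : 0 <= K * t ^+ (2 * D0) by rewrite mulr_ge0 // exprn_ge0 // ltW.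
  have e : K * F * t ^+ (2 * D0) = (K * t ^+ (2 * D0)) * F by ring.
  rewrite e; apply: le_trans (ler_wpM2l a0 hF) _.
  have e2 : K * t ^+ (2 * D0) * (kappa * g (2 * D0)%N t') = (K * kappa * t ^+ (2 * D0)) * g (2 * D0)%N t' by ring.
  by rewrite e2 -[X in _ <= X]mul1r ler_wpM2r.
have mem : dstar_set C A B cC beta Rc t' delta (2 * D0)%N.
  split; first by rewrite muln_gt0.
  change (f (2 * D0)%N <= (g (2 * D0)%N t')%:E)%E.
  by apply: le_trans Hd _; rewrite lee_fin.
rewrite dstar_eq; apply: (@le_trans _ _ (((2 * D0)%N)%:R)%:E).
  by apply: ge_ereal_inf; exists (((2 * D0)%N)%:R)%:E => //; exists (2 * D0)%N.
rewrite -EFinM lee_fin natrM.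
have : 0 <= D0%:R :> R by [].
nra.
Qed.
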